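(* The map $f$ defined below is a bijection from $\mathcal{G}_2$ onto $\mathcal{A}_2$, and $f(\pi)$ is a partition of the same integer as $\pi$.
   Context: Partitions are nonincreasing finite sequences of positive integers; $m_j(\pi)$ is the multiplicity of $j$ in $\pi$, $\ell(\pi)$ the number of parts, and $\pi\cup\lambda$ the partition formed by all parts of both (as a multiset). $\langle a^{m}\rangle$ denotes the partition consisting of $m$ copies of $a$. $\mathcal{G}_2$ is the set of partitions $\pi$ with $m_1(\pi)\le 1$ and $m_j(\pi)+m_{j+1}(\pi)\le 2$ for all $j\ge1$. For $\pi\in\mathcal{G}_2$ every part has multiplicity at most $2$. Let $D(\pi)$ be the number of distinct parts of multiplicity $2$, let $R_1(\pi)>R_2(\pi)>\dots>R_{D(\pi)}(\pi)$ be these parts, and set $R_{D(\pi)+1}(\pi)=0$, $R_0(\pi)=\infty$. For $0\le k\le D(\pi)$ let $\pi^{(k)}$ be the partition consisting of the parts of $\pi$ strictly between $R_{k+1}(\pi)$ and $R_k(\pi)$ (these parts are distinct). For a partition $\mu$ and integer $c$, $\mu+\langle c^{\ell(\mu)}\rangle$ denotes $\mu$ with $c$ added to each part. Define $$f(\pi)=\bigcup_{i=1}^{D(\pi)}\big\langle (2i)^{R_i(\pi)-R_{i+1}(\pi)-\ell(\pi^{(i)})}\big\rangle\ \cup\ \bigcup_{i=0}^{D(\pi)}\Big(\pi^{(i)}+\langle (2i)^{\ell(\pi^{(i)})}\rangle\Big).$$ For a partition $\lambda$, $R_1(\lambda)$ is its largest part of multiplicity $\ge2$ (or $0$ if none).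 $\mathcal{A}_2$ is the set of partitions $\lambda$ such that $m_j(\lambda)\le1$ for odd $j$, $m_j(\lambda)=0$ for odd $j<R_1(\lambda)$, and $m_j(\lambda)\ge 2$ for even $j$ with $0<j<R_1(\lambda)$. *)

(* Defs.v *)
From mathcomp Require Import all_boot.
Set Implicit Arguments. Unset Strict Implicit. Unset Printing Implicit Defensive.

Definition is_partition (s : seq nat) : bool :=
  sorted geq s && all (fun x => 0 < x) s.

Definition mult (j : nat) (s : seq nat) : nat := count_mem j s.

Definition G2 (p : seq nat) : Prop :=
  is_partition p /\ mult 1 p <= 1 /\
  (forall j, 1 <= j -> mult j p + mult j.+1 p <= 2).

(* R_1 > R_2 > ... > R_D : distinct parts of multiplicity 2 (decreasing) *)
Definition reps (p : seq nat) : seq nat :=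
  undup [seq x <- p | mult x p == 2].

Definition D (p : seq nat) : nat := size (reps p).

(* R_i for i >= 1 ; R_{D+1} = 0 via the default of nth *)
Definition R (p : seq nat) (i : nat) : nat := nth 0 (reps p) i.-1.

(* pi^(k): parts strictly between R_{k+1} and R_k  (R_0 = infinity) *)
Definition pik (p : seq nat) (k : nat) : seq nat :=
  [seq x <- p | (R p k.+1 < x) && ((k == 0) || (x < R p k))].

(* the map f; the multiset union is returned as a nonincreasing sequence *)
Definition f (p : seq nat) : seq nat :=
  sort geq
    (flatten [seq nseq (R p i - R p i.+1 - size (pik p i)) (2 * i) | i <- iota 1 (D p)]
     ++ flatten [seq map (addn (2 * i)) (pik p i) | i <- iota 0 (D p).+1]).

Definition R1 (l : seq nat) : nat :=
  foldr maxn 0 [seq x <- l | 2 <= mult x l].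

Definition A2 (l : seq nat) : Prop :=
  is_partition l /\
  (forall j, odd j -> mult j l <= 1) /\
  (forall j, odd j -> j < R1 l -> mult j l = 0) /\
  (forall j, ~~ odd j -> 0 < j -> j < R1 l -> 2 <= mult j l).

(* Main.v *)
Require Import Defs.
From mathcomp Require Import all_boot.
From mathcomp Require Import zify.

Lemma geq_tr : transitive geq.
Proof. by move=> y x z /= h1 h2; exact: leq_trans h2 h1. Qed.
Lemma geq_anti : antisymmetric geq.
Proof. by move=> x y /= /andP[h1 h2]; apply/eqP; rewrite eqn_leq h1 h2. Qed.
Lemma geq_tot : total geq.
Proof. by move=> x y /=; exact: leq_total. Qed.

Lemma sorted_f p : sorted geq (f p).
Proof. exact: (sort_sorted geq_tot). Qed.

Definition X (p : seq nat) : seq nat :=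
    (flatten [seq nseq (R p i - R p i.+1 - size (pik p i)) (2 * i) | i <- iota 1 (D p)]
     ++ flatten [seq map (addn (2 * i)) (pik p i) | i <- iota 0 (D p).+1]).

Lemma f_X p : f p = sort geq (X p). Proof. by []. Qed.
Lemma perm_fX p : perm_eq (f p) (X p).
Proof. by rewrite f_X perm_sort. Qed.

Definition w p := R p 1 + size (pik p 0).

Lemma mult_cons j a s : mult j (a :: s) = (a == j) + mult j s.
Proof. by rewrite /mult /= eq_sym. Qed.

Lemma mult0 j s : j \notin s -> mult j s = 0.
Proof. by move=> h; rewrite /mult; apply/count_memPn. Qed.

Lemma mult_gt0 j s : (0 < mult j s) = (j \in s).
Proof. by rewrite /mult -has_pred1 has_count. Qed.

Lemma reps_sub p x : x \in reps p -> x \in p.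
Proof. by rewrite /reps mem_undup mem_filter => /andP[]. Qed.

Lemma R_lt p a k : 0 < a -> all (fun x => x < a) p -> R p k < a.
Proof.
move=> a0 /allP h; rewrite /R.
case: (ltnP k.-1 (size (reps p))) => hk.
  by apply: h; apply: reps_sub; apply: mem_nth.
by rewrite nth_default.
Qed.

Lemma reps_single a p : a \notin p -> reps (a :: p) = reps p.
Proof.
move=> ha; rewrite /reps /= eqxx mult0 //=.
congr undup; apply: eq_in_filter => x xp.
have -> : (a == x) = false by apply/eqP => e; move: ha; rewrite e xp.
done.
Qed.

Lemma L1 a p : 0 < a -> all (fun x => x < a) p ->
  perm_eq (f (a :: p)) (a :: f p) /\ w (a :: p) = (w p).+1.
Proof.
move=> a0 ha.
have anp : a \notin p by apply/negP => /(allP ha); rewrite ltnn.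
have hR : forall k, R (a :: p) k = R p k by move=> k; rewrite /R reps_single.
have hD : D (a :: p) = D p by rewrite /D reps_single.
have hp0 : pik (a :: p) 0 = a :: pik p 0.
  by rewrite /pik /= hR (R_lt _ _ _ a0 ha) /=.
have hpk : forall k, 0 < k -> pik (a :: p) k = pik p k.
  move=> [//|k] _; rewrite /pik /=; rewrite !hR.
  have -> : a < R p k.+1 = false by apply/negbTE; rewrite -leqNgt ltnW // (R_lt _ _ _ a0 ha).
  by rewrite andbF.
split; last by rewrite /w hp0 hR /= addnS.
apply: (perm_trans (perm_fX _)); apply: (@perm_trans _ (a :: X p)); last by rewrite perm_cons perm_sym perm_fX.
rewrite /X hD.
have -> : [seq nseq (R (a :: p) i - R (a :: p) i.+1 - size (pik (a :: p) i)) (2 * i) | i <- iota 1 (D p)]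
   = [seq nseq (R p i - R p i.+1 - size (pik p i)) (2 * i) | i <- iota 1 (D p)].
  apply/eq_in_map => i; rewrite mem_iota => /andP[i1 _]; by rewrite !hR hpk.
rewrite /= hp0 /=.
have -> : [seq map (addn (2 * i)) (pik (a :: p) i) | i <- iota 1 (D p)]
   = [seq map (addn (2 * i)) (pik p i) | i <- iota 1 (D p)].
  apply/eq_in_map => i; rewrite mem_iota => /andP[i1 _]; by rewrite hpk.
by rewrite -cat1s perm_catCA.
Qed.

Lemma reps_double b p : b \notin p -> reps (b :: b :: p) = b :: reps p.
Proof.
move=> hb; rewrite /reps /= eqxx mult0 //=.
have -> : [seq x <- p | (b == x) + ((b == x) + mult x p) == 2] = [seq x <- p | mult x p == 2].
  apply: eq_in_filter => x xp.
  have -> : (b == x) = false by apply/eqP => e; move: hb; rewrite e xp.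
  done.
rewrite inE eqxx /=.
have -> : b \in [seq x <- p | mult x p == 2] = false.
  by apply/negbTE; rewrite mem_filter negb_and hb orbT.
done.
Qed.

Lemma flatten_map_map (g : nat -> nat) (F : nat -> seq nat) s :
  flatten [seq map g (F i) | i <- s] = map g (flatten [seq F i | i <- s]).
Proof. by rewrite map_flatten -map_comp. Qed.

Lemma X_double b p : 0 < b -> all (fun x => x < b) p ->
  X (b :: b :: p) = nseq (b - w p) 2 ++ map (addn 2) (X p) /\ w (b :: b :: p) = b.
Proof.
move=> b0 hb.
have bnp : b \notin p by apply/negP => /(allP hb); rewrite ltnn.
set q := b :: b :: p.
have hR : forall k, R q k.+1 = if k is 0 then b else R p k.
  by move=> [|k]; rewrite /R reps_double.
have hD : D q = (D p).+1 by rewrite /D reps_double.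
have hp0 : pik q 0 = [::].
  rewrite /pik /= hR ltnn /=.
  rewrite (@eq_in_filter _ _ pred0) ?filter_pred0 // => x /(allP hb) /= xb.
  by rewrite ltnNge ltnW.
have hpk : forall k, pik q k.+1 = pik p k.
  move=> [|k].
    rewrite /pik /= !hR ltnn andbF /=; apply: eq_in_filter => x /(allP hb) /= ->.
    by rewrite andbT.
  rewrite /pik /= !hR.
  have -> : b < R p k.+1 = false by apply/negbTE; rewrite -leqNgt ltnW // (R_lt _ _ _ b0 hb).
  by rewrite andbF.
have hw : w q = b by rewrite /w hp0 hR addn0.
split => //.
rewrite /X hD /= hp0 /= !hR hpk subnDA.
rewrite -catA; congr (_ ++ _).
have hi : iota 2 (D p) = map S (iota 1 (D p)).
  by rewrite (iotaDl 1 1); apply: eq_map => i.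
rewrite hi -!map_comp map_cat -flatten_map_map.
congr (_ ++ _).
  congr flatten; apply/eq_in_map => i; rewrite mem_iota => /andP[i1 _] /=.
  rewrite map_nseq hR hpk; case: i i1 => // i _.
  by rewrite hR mulnS.
rewrite map_cat; congr (_ ++ _).
  by rewrite -map_comp; apply: eq_map => x /=; lia.
rewrite -flatten_map_map; congr flatten; apply/eq_in_map => i _ /=.
rewrite hpk -map_comp; apply: eq_map => x /=; rewrite mulnS; lia.
Qed.

Lemma L2 b p : 0 < b -> all (fun x => x < b) p ->
  perm_eq (f (b :: b :: p)) (nseq (b - w p) 2 ++ map (addn 2) (f p)) /\ w (b :: b :: p) = b.
Proof.
move=> b0 hb; have [hX hw] := X_double _ _ b0 hb; split => //.
apply: (perm_trans (perm_fX _)); rewrite hX perm_cat2l.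
by apply: perm_map; rewrite perm_sym perm_fX.
Qed.

Opaque f w X.

Lemma mult_le_cons j a p : mult j p <= mult j (a :: p).
Proof. by rewrite mult_cons leq_addl. Qed.

Lemma part_cons a p : is_partition (a :: p) =
  [&& all (fun x => x <= a) p, 0 < a & is_partition p].
Proof.
rewrite /is_partition /= (path_sortedE geq_tr).
by case: (all _ p); case: (0 < a); case: (sorted _ _); case: (all _ p).
Qed.

Lemma G2_tail a p : G2 (a :: p) -> G2 p.
Proof.
move=> [hp [h1 h2]]; split; first by move: hp; rewrite part_cons => /and3P[].
split; first exact: leq_trans (mult_le_cons _ a _) h1.
move=> j j1; apply: leq_trans (h2 j j1); apply: leq_add; exact: mult_le_cons.
Qed.

Arguments G2_tail {a p}.

Lemma G2_cases p : G2 p -> p = [::] \/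
  (exists a p', p = a :: p' /\ G2 p' /\ 0 < a /\ all (fun x => x < a) p') \/
  (exists b p', p = b :: b :: p' /\ G2 p' /\ 2 <= b /\ all (fun x => x.+2 <= b) p').
Proof.
case: p => [|a p]; first by left.
move=> hG; right; have hG' := G2_tail hG.
have [hp [h1 h2]] := hG.
move: (hp); rewrite part_cons => /and3P[hle a0 hpp].
case ap: (a \in p); last first.
  left; exists a, p; do 3!split => //.
  apply/allP => x xp; move/allP: hle => /(_ x xp); rewrite leq_eqVlt.
  case/orP => // /eqP e; by move: ap; rewrite -e xp.
right; move: ap hle hpp hG' hG hp h1 h2.
case: p => [//|c p] ap hle hpp hG' hG hp h1 h2.
have ca : c = a.
  move: hle => /= /andP[ca _]; apply/eqP; rewrite eqn_leq ca /=.
  move: ap; rewrite inE => /orP[/eqP -> //|ap].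
  by move: hpp; rewrite part_cons => /and3P[/allP /(_ a ap)].
subst c; exists a, p; split => //; split; first exact: G2_tail hG'.
have ma : mult a (a :: a :: p) <= 2.
  by apply: leq_trans (h2 a a0); apply: leq_addr.
have anp : a \notin p.
  apply/negP => ap'; move: ma; rewrite !mult_cons eqxx.
  have : 0 < mult a p by rewrite mult_gt0.
  lia.
have a2 : 2 <= a.
  case: a a0 h1 {hle ap hpp hG' h2 ma anp hp hG} => [//|[|a]] // _.
split => //.
have hpa : all (fun x => x <= a) p.
  by move: hpp; rewrite part_cons => /and3P[].
apply/allP => x xp.
have xa : x < a.
  rewrite ltn_neqAle (allP hpa x xp) andbT; apply/negP => /eqP e; by move: anp; rewrite -e xp.
rewrite ltn_neqAle xa andbT; apply/negP => /eqP e.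
have := h2 a.-1 (ltac:(lia)).
have -> : a.-1.+1 = a by lia.
rewrite !mult_cons eqxx.
have : 0 < mult a.-1 p.
  rewrite mult_gt0; have -> : a.-1 = x by lia.
  done.
lia.
Qed.

Lemma G2_single a p : G2 p -> 0 < a -> all (fun x => x < a) p -> mult a.-1 p <= 1 ->
  G2 (a :: p).
Proof.
move=> [hp [h1 h2]] a0 ha hm.
have anp : a \notin p by apply/negP => /(allP ha); rewrite ltnn.
have m0 : forall j, a <= j -> mult j p = 0.
  move=> j aj; apply: mult0; apply/negP => /(allP ha); lia.
split.
  rewrite part_cons; apply/and3P; split => //; apply/allP => x /(allP ha) /=; lia.
split.
  rewrite mult_cons; case: eqP => [e|_] //; rewrite m0 //; lia.
move=> j j1; rewrite !mult_cons.
case: (eqVneq a j) => [<-|aj].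
  rewrite m0 // m0 //; have -> : (a == a.+1) = false by apply/eqP; lia.
  done.
case: (eqVneq a j.+1) => [e|aj1].
  have -> : mult j.+1 p = 0 by rewrite m0 // e.
  have -> : j = a.-1 by lia.
  rewrite add0n addn0 /=; lia.
rewrite !add0n; exact: h2.
Qed.

Lemma G2_double b p : G2 p -> 2 <= b -> all (fun x => x.+2 <= b) p ->
  G2 (b :: b :: p).
Proof.
move=> [hp [h1 h2]] b2 hb.
have m0 : forall j, b.-1 <= j -> mult j p = 0.
  move=> j aj; apply: mult0; apply/negP => /(allP hb); lia.
split.
  have hle : all (fun x => x <= b) p by apply/allP => x /(allP hb) /=; lia.
  have b0 : 0 < b by lia.
  by rewrite !part_cons /= leqnn hle hp b0.
split.
  rewrite !mult_cons; have -> : (b == 1) = false by apply/eqP; lia.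
  done.
move=> j j1; rewrite !mult_cons.
case: (eqVneq b j) => [<-|aj].
  rewrite m0 ?m0; try lia.
case: (eqVneq b j.+1) => [e|aj1].
  rewrite (m0 j) ?(m0 j.+1) /=; lia.
have := h2 j j1; rewrite /=; lia.
Qed.

Definition bigR l j := exists x, j < x /\ 2 <= mult x l.
Definition Qm l := (forall j, odd j -> mult j l <= 1) /\
  (forall j, odd j -> bigR l j -> mult j l = 0) /\
  (forall j, ~~ odd j -> 0 < j -> bigR l j -> 2 <= mult j l).

Lemma ltfoldr j s : (j < foldr maxn 0 s) = has (fun x => j < x) s.
Proof. by elim: s => [//|x s IH] /=; rewrite leq_max IH. Qed.

Lemma R1P l j : j < R1 l <-> bigR l j.
Proof.
rewrite /R1 ltfoldr; split.
  by case/hasP => x; rewrite mem_filter => /andP[h1 _] h2; exists x.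
move=> [x [h1 h2]]; apply/hasP; exists x => //.
rewrite mem_filter h2 /= -mult_gt0; lia.
Qed.

Lemma A2E l : A2 l <-> is_partition l /\ Qm l.
Proof.
split.
  move=> [h0 [h1 [h2 h3]]]; split => //; split => //; split.
    by move=> j oj /R1P; apply: h2.
  by move=> j oj j0 /R1P; apply: h3.
move=> [h0 [h1 [h2 h3]]]; split => //; split => //; split.
  by move=> j oj /R1P; apply: h2.
by move=> j oj j0 /R1P; apply: h3.
Qed.

Lemma mult_perm j l l' : perm_eq l l' -> mult j l = mult j l'.
Proof. by move/permP => h; apply: h. Qed.

Lemma Qm_perm l l' : perm_eq l l' -> Qm l -> Qm l'.
Proof.
move=> hp [h1 [h2 h3]].
have hm := fun j => mult_perm j _ _ hp.
have hb : forall j, bigR l' j -> bigR l j.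
  by move=> j [x [h h']]; exists x; rewrite hm.
split; first by move=> j; rewrite -hm; apply: h1.
split; first by move=> j oj /hb; rewrite -hm; apply: h2.
by move=> j oj j0 /hb; rewrite -hm; apply: h3.
Qed.

Lemma Qm_cons a l : 0 < a -> all (fun x => x < a) l -> Qm l -> Qm (a :: l).
Proof.
move=> a0 ha [h1 [h2 h3]].
have m0 : forall j, a <= j -> mult j l = 0.
  move=> j aj; apply: mult0; apply/negP => /(allP ha); lia.
have hb : forall j, bigR (a :: l) j -> bigR l j.
  move=> j [x [h h']]; exists x; split => //.
  move: h'; rewrite mult_cons; case: eqP => [e|_] //.
  by rewrite -e m0.
split.
  move=> j oj; rewrite mult_cons; case: eqP => [e|_]; last by apply: h1.
  by rewrite -e m0.
split.
  move=> j oj /hb hj; rewrite mult_cons; case: eqP => [e|_]; last by apply: h2.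
  exfalso; case: hj => x [jx]; have := m0 x (ltac:(lia)); lia.
move=> j oj j0 /hb hj; apply: leq_trans (mult_le_cons _ _ _); exact: h3.
Qed.

Lemma mult_map2 j l : mult j (map (addn 2) l) = if 2 <= j then mult (j - 2) l else 0.
Proof.
rewrite /mult count_map; case: ifP => h.
  apply: eq_count => x /=; apply/eqP/eqP; lia.
apply/eqP; rewrite -leqn0 leqNgt -has_count; apply/hasP => -[x _ /= /eqP]; lia.
Qed.

Lemma mult_nseq j c y : mult j (nseq c y) = (y == j) * c.
Proof. by rewrite /mult count_nseq. Qed.

Lemma mult_double j c l : all (fun x => 0 < x) l ->
  mult j (nseq c 2 ++ map (addn 2) l) = if j == 2 then c else if 2 <= j then mult (j - 2) l else 0.
Proof.
move=> hl; rewrite /mult count_cat -!/(mult _ _) mult_nseq mult_map2.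
case: (eqVneq j 2) => [->|ne] /=.
  have -> : mult (2 - 2) l = 0 by apply: mult0; apply/negP => /(allP hl).
  by rewrite mul1n addn0.
by rewrite mul0n.
Qed.

Lemma Qm_double c l : 2 <= c -> all (fun x => 0 < x) l -> Qm l ->
  Qm (nseq c 2 ++ map (addn 2) l).
Proof.
move=> c2 hl [h1 [h2 h3]].
have hm := fun j => mult_double j c _ hl.
have m00 : mult 0 l = 0 by apply: mult0; apply/negP => /(allP hl).
have hb : forall j, 2 < j -> bigR (nseq c 2 ++ map (addn 2) l) j -> bigR l (j - 2).
  move=> j j2 [x [h h']]; exists (x - 2); split; first lia.
  move: h'; rewrite hm; case: eqP => [e|_]; first lia.
  by case: ifP.
split.
  move=> j oj; rewrite hm; case: eqP => [e|_]; first by rewrite e in oj.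
  case: ifP => // j2; apply: h1; by rewrite oddB // addbF.
split.
  move=> j oj hj; rewrite hm; case: eqP => [e|_]; first by rewrite e in oj.
  case: ifP => // j2.
  have j3 : 2 < j by case: j oj j2 {hj} => [|[|[|j]]].
  by apply: h2 (hb _ j3 hj); rewrite oddB // addbF.
move=> j oj j0 hj; rewrite hm; case: eqP => [e|ne]; first by [].
have j3 : 2 < j by case: j oj j0 ne {hj} => [|[|[|j]]].
have -> : 2 <= j by lia.
apply: h3 (hb _ j3 hj); last lia.
rewrite oddB; last lia. by rewrite (negbTE oj).
Qed.

Lemma f_nil : f [::] = [::] /\ w [::] = 0.
Proof. by []. Qed.

Lemma sumn_map2 l : sumn (map (addn 2) l) = 2 * size l + sumn l.
Proof. elim: l => [//|x l IH] /=; rewrite IH; lia. Qed.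

Lemma head_lt a p : 0 < a -> all (fun x => x < a) p -> head 0 p < a.
Proof. by case: p => //= x p _ /andP[]. Qed.

Lemma all_lt_trans a b l : all (fun x => x <= a) l -> a < b -> all (fun x => x < b) l.
Proof. move=> h ab; apply/allP => x /(allP h) /=; lia. Qed.

Lemma Qm_nil : Qm [::].
Proof. split => //; split => //; by move=> j _ _ [x [_]]. Qed.

Definition INV p := [/\ all (fun x => 0 < x) (f p), Qm (f p),
  all (fun x => x <= head 0 p) (f p), size (f p) = w p /\ w p <= head 0 p &
  sumn (f p) = sumn p].

Lemma INV_nil : INV [::].
Proof. rewrite /INV (proj1 f_nil) (proj2 f_nil); split => //; exact: Qm_nil. Qed.

Lemma inv_all n p : size p <= n -> G2 p -> INV p.
Proof.
elim: n p => [|n IH] p hs hG.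
  by case: p hs hG => // _ _; exact: INV_nil.
case: (G2_cases _ hG) hs => [->|[[a [p' [-> [hG' [a0 ha]]]]]|[b [p' [-> [hG' [b2 hb]]]]]]] hs.
- exact: INV_nil.
- have [i1 i2 i3 [i4 i5] i6] := IH p' (ltac:(move: hs => /=; lia)) hG'.
  have [hP hw] := L1 _ _ a0 ha.
  have hh := head_lt _ _ a0 ha.
  have hfa : all (fun x => x < a) (f p') by apply: all_lt_trans i3 hh.
  split.
  + by rewrite (perm_all _ hP) /= a0.
  + apply: (Qm_perm (a :: f p') (f (a :: p'))); first by rewrite perm_sym.
    exact: Qm_cons.
  + by rewrite (perm_all _ hP) /= leqnn; apply/allP => x /(allP hfa) /=; lia.
  + by rewrite (perm_size hP) /= i4 hw; lia.
  + by rewrite (perm_sumn hP) /= i6.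
- have hb' : all (fun x => x < b) p' by apply/allP => x /(allP hb) /=; lia.
  have b0 : 0 < b by lia.
  have [i1 i2 i3 [i4 i5] i6] := IH p' (ltac:(move: hs => /=; lia)) hG'.
  have [hP hw] := L2 _ _ b0 hb'.
  have hh : head 0 p' + 2 <= b by case: p' hb {i1 i2 i3 i4 i5 i6 hs hG hG' hP hw hb'} => //= x r /andP[]; lia.
  split.
  + rewrite (perm_all _ hP) all_cat; apply/andP; split.
      by apply/allP => x; rewrite mem_nseq => /andP[_ /eqP ->].
    by rewrite all_map; apply/allP => x /=.
  + apply: (Qm_perm _ (f (b :: b :: p'))); first by rewrite perm_sym; exact: hP.
    apply: Qm_double => //; lia.
  + rewrite (perm_all _ hP) all_cat; apply/andP; split.
      by apply/allP => x; rewrite mem_nseq => /andP[_ /eqP ->].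
    rewrite all_map; apply/allP => x /(allP i3) /=; lia.
  + by rewrite (perm_size hP) size_cat size_nseq size_map i4 hw /=; lia.
  + rewrite (perm_sumn hP) sumn_cat sumn_nseq sumn_map2 i4 i6 /=; lia.
Qed.

Lemma INVp p : G2 p -> INV p.
Proof. exact: inv_all (leqnn _). Qed.

Definition K p := ~~ uniq (f p) -> w p < head 0 p \/ exists p'', p = head 0 p :: head 0 p :: p''.

Lemma K_all n p : size p <= n -> G2 p -> K p.
Proof.
elim: n p => [|n IH] p hs hG.
  by case: p hs hG => // _ _; rewrite /K (proj1 f_nil).
move: (hG) => hGc.
case: (G2_cases _ hG) hs hGc => [->|[[a [p' [-> [hG' [a0 ha]]]]]|[b [p' [-> [hG' [b2 hb]]]]]]] hs hGc.
- by rewrite /K (proj1 f_nil).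
- have hK := IH p' (ltac:(move: hs => /=; lia)) hG'.
  have [i1 i2 i3 [i4 i5] i6] := INVp _ hG'.
  have [hP hw] := L1 _ _ a0 ha.
  have hh := head_lt _ _ a0 ha.
  have hfa : all (fun x => x < a) (f p') by apply: all_lt_trans i3 hh.
  move=> nu; left; rewrite hw /=.
  have nu' : ~~ uniq (f p').
    move: nu; rewrite (perm_uniq hP) /=.
    have -> : a \notin f p' by apply/negP => /(allP hfa); rewrite ltnn.
    done.
  case: (G2_cases _ hG') => [e|[[c [q [e [_ [c0 hc]]]]]|[c [q [e [hq [c2 hc]]]]]]].
  + by move: nu'; rewrite e (proj1 f_nil).
  + case: (hK nu') => [lt|[p'' e']]; first lia.
    exfalso; move: e'; rewrite e /= => -[e'].
    by move: hc; rewrite e' /= ltnn.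
  + subst p'.
    have hc' : all (fun x => x < c) q by apply/allP => x /(allP hc) /=; lia.
    have [_ hw'] := L2 c q (ltac:(lia)) hc'.
    rewrite hw'.
    have ca : c < a by move: ha => /= /andP[].
    rewrite ltn_neqAle; apply/andP; split; last by [].
    apply/negP => /eqP ea.
    have [_ [_ h2]] := hGc.
    have := h2 c (ltac:(lia)).
    rewrite -ea !mult_cons eqxx /=.
    have -> : (c.+1 == c) = false by apply/eqP; lia.
    lia.
- by move=> _; right; exists p'.
Qed.

Lemma f_nil_inv p : G2 p -> f p = [::] -> p = [::].
Proof.
move=> hG hf; have [_ _ _ [hs _] _] := INVp _ hG.
case: (G2_cases _ hG) hs => [//|[[a [p' [e [hG' [a0 ha]]]]]|[b [p' [e [hG' [b2 hb]]]]]]] hs.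
  by move: hs; rewrite hf e (proj2 (L1 _ _ a0 ha)).
have hb' : all (fun x => x < b) p' by apply/allP => x /(allP hb) /=; lia.
move: hs; rewrite hf e (proj2 (L2 b p' (ltac:(lia)) hb')). move=> /= h; lia.
Qed.

Lemma mixed a p' b q' : G2 (a :: p') -> 0 < a -> all (fun x => x < a) p' ->
  G2 (b :: b :: q') -> G2 q' -> 2 <= b -> all (fun x => x.+2 <= b) q' ->
  f (a :: p') = f (b :: b :: q') -> False.
Proof.
move=> hGp a0 ha hGq hGq' b2 hb e.
have hb' : all (fun x => x < b) q' by apply/allP => x /(allP hb) /=; lia.
have [hPq hwq] := L2 b q' (ltac:(lia)) hb'.
have [hPp hwp] := L1 _ _ a0 ha.
have [_ _ iq3 [iq4 _] _] := INVp _ hGq.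
have [_ _ iq'3 [iq'4 iq'5] _] := INVp _ hGq'.
have hh : head 0 q' + 2 <= b by case: (q') hb => //= x r /andP[]; lia.
have nu : ~~ uniq (f (b :: b :: q')).
  rewrite (perm_uniq hPq) cat_uniq.
  have -> : b - w q' = (b - w q' - 2).+2 by lia.
  by rewrite /= ?inE ?eqxx.
have hK := K_all _ _ (leqnn _) hGp.
have ain : a \in f (a :: p') by rewrite (perm_mem hPp) inE eqxx.
move: nu; rewrite -e => /hK [lt|[p'' ep]]; last first.
  move: ep => /= [ep]; by move: ha; rewrite ep /= ltnn.
move: ain; rewrite e => /(allP iq3) /= ab.
have := congr1 size e; rewrite iq4 hwq.
have [_ _ _ [ip4 _] _] := INVp _ hGp.
rewrite ip4; move: lt => /=; lia.
Qed.

Lemma sorted_f_eq p q : perm_eq (f p) (f q) -> f p = f q.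
Proof. apply: sorted_eq; [exact: geq_tr | exact: geq_anti | exact: sorted_f | exact: sorted_f]. Qed.

Lemma inj_all n p q : size p <= n -> G2 p -> G2 q -> f p = f q -> p = q.
Proof.
elim: n p q => [|n IH] p q hs hGp hGq e.
  by case: p hs hGp e => // _ hGp e; apply/esym/f_nil_inv => //; rewrite -e (proj1 f_nil).
move: (hGp) (hGq) => hGpc hGqc.
case: (G2_cases _ hGp) hs hGpc e => [->|[[a [p' [-> [hG' [a0 ha]]]]]|[b [p' [-> [hG' [b2 hb]]]]]]] hs hGpc e.
- by apply/esym/f_nil_inv => //; rewrite -e (proj1 f_nil).
- case: (G2_cases _ hGq) hGqc e => [->|[[a' [q' [-> [hGq' [a0' ha']]]]]|[b' [q' [-> [hGq' [b2' hb']]]]]]] hGqc e.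
  + by have := f_nil_inv _ hGpc; rewrite e (proj1 f_nil) => /(_ erefl).
  + have [hP1 _] := L1 _ _ a0 ha; have [hP2 _] := L1 _ _ a0' ha'.
    have hP : perm_eq (a :: f p') (a' :: f q').
      by rewrite perm_sym in hP1; apply: perm_trans hP1 _; rewrite e.
    have [_ _ i3 _ _] := INVp _ hG'; have [_ _ j3 _ _] := INVp _ hGq'.
    have hh := head_lt _ _ a0 ha; have hh' := head_lt _ _ a0' ha'.
    have aa : a = a'.
      have : a \in a' :: f q' by rewrite -(perm_mem hP) inE eqxx.
      have : a' \in a :: f p' by rewrite (perm_mem hP) inE eqxx.
      rewrite !inE => /orP[/eqP -> //|/(allP i3) /= h1] /orP[/eqP -> //|/(allP j3) /= h2].
      lia.
    subst a'; rewrite perm_cons in hP.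
    by rewrite (IH p' q') // ?(sorted_f_eq _ _ hP) //; move: hs => /=; lia.
  + by exfalso; apply: (mixed _ _ _ _ hGpc a0 ha hGqc hGq' b2' hb' e).
- case: (G2_cases _ hGq) hGqc e => [->|[[a' [q' [-> [hGq' [a0' ha']]]]]|[b' [q' [-> [hGq' [b2' hb']]]]]]] hGqc e.
  + by have := f_nil_inv _ hGpc; rewrite e (proj1 f_nil) => /(_ erefl).
  + by exfalso; apply: (mixed _ _ _ _ hGqc a0' ha' hGpc hG' b2 hb (esym e)).
  + have hbl : all (fun x => x < b) p' by apply/allP => x /(allP hb) /=; lia.
    have hbl' : all (fun x => x < b') q' by apply/allP => x /(allP hb') /=; lia.
    have [hP1 hw1] := L2 b p' (ltac:(lia)) hbl; have [hP2 hw2] := L2 b' q' (ltac:(lia)) hbl'.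
    have [i1 _ _ [_ i5] _] := INVp _ hG'; have [j1 _ _ [_ j5] _] := INVp _ hGq'.
    have hh : head 0 p' + 2 <= b by case: (p') hb => //= x r /andP[]; lia.
    have hh' : head 0 q' + 2 <= b' by case: (q') hb' => //= x r /andP[]; lia.
    have hP : perm_eq (nseq (b - w p') 2 ++ map (addn 2) (f p'))
                      (nseq (b' - w q') 2 ++ map (addn 2) (f q')).
      by rewrite perm_sym in hP1; apply: perm_trans hP1 _; rewrite e.
    have cc : b - w p' = b' - w q'.
      have := mult_perm 2 _ _ hP; by rewrite !mult_double.
    rewrite cc perm_cat2l in hP.
    have hP' := perm_map_inj (@addnI 2) hP.
    have epq : p' = q'.
      by apply: (IH p' q') => //; [move: hs => /=; lia | apply: sorted_f_eq].
    subst q'; have -> : b = b' by lia.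
    done.
Qed.

Lemma nuniq_mult l : ~~ uniq l -> exists x, 2 <= mult x l.
Proof.
elim: l => [//|x l IH] /=; rewrite negb_and negbK.
case xl: (x \in l) => /=.
  by move=> _; exists x; have := mult_cons x x l; move: xl; rewrite -mult_gt0 eqxx; lia.
by move/IH => [y hy]; exists y; apply: leq_trans hy (mult_le_cons _ _ _).
Qed.

Lemma count_leS m s : count (fun x => x <= m.+1) s = count (fun x => x <= m) s + mult m.+1 s.
Proof.
elim: s => [//|y s IH] /=; rewrite IH /mult /=.
case: (ltngtP y m.+1) => h.
- have -> : y <= m by lia.
  by rewrite /=; lia.
- have -> : (y <= m) = false by apply/negbTE; rewrite -ltnNge; lia.
  by rewrite /=; lia.
- rewrite h ltnn /=; lia.
Qed.

Lemma size_ge l n : (forall j, 0 < j -> j <= n.*2 -> ~~ odd j -> 2 <= mult j l) ->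
  n.*2 <= count (fun x => x <= n.*2) l.
Proof.
elim: n => [//|n IH] h.
have := IH (fun j j0 jn oj => h j j0 (ltac:(rewrite doubleS; lia)) oj).
rewrite doubleS !count_leS.
have := h n.*2.+2 (ltac:(lia)) (ltac:(rewrite doubleS; lia)) (ltac:(by rewrite /= odd_double)).
lia.
Qed.

Lemma Qm_size a l : Qm l -> 2 <= mult a l -> a <= size l.
Proof.
move=> [h1 [h2 h3]] ha.
have ea : ~~ odd a by apply/negP => oa; have := h1 a oa; lia.
have -> : a = (a./2).*2 by rewrite -[in LHS](odd_double_half a) (negbTE ea).
apply: leq_trans (size_ge _ _ _) (count_size _ _).
move=> j j0 ja oj.
have e2 : (a./2).*2 = a by rewrite -[in RHS](odd_double_half a) (negbTE ea).
rewrite e2 in ja.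
case: (ltngtP j a) ja => // [jl|je] _; last by rewrite je.
by apply: h3 => //; exists a.
Qed.

Lemma Qm_tail a l : all (fun x => x < a) l -> Qm (a :: l) -> Qm l.
Proof.
move=> ha [h1 [h2 h3]].
have hb : forall j, bigR l j -> bigR (a :: l) j.
  by move=> j [x [h h']]; exists x; split => //; apply: leq_trans h' (mult_le_cons _ _ _).
split; first by move=> j oj; apply: leq_trans (mult_le_cons _ a _) (h1 j oj).
split.
  move=> j oj /hb hj; have := h2 j oj hj; have := mult_le_cons j a l; lia.
move=> j oj j0 hj; have := h3 j oj j0 (hb _ hj); rewrite mult_cons.
case: eqP => [e|_] //.
exfalso; case: hj => x [jx hx]; have : x \in l by rewrite -mult_gt0; lia.
move/(allP ha) => /=; lia.
Qed.

Definition down (l : seq nat) := [seq y - 2 | y <- l & 2 < y].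

Lemma mult_down j l : mult j (down l) = if 0 < j then mult j.+2 l else 0.
Proof.
rewrite /mult /down count_map count_filter; case: ifP => j0.
  apply: eq_count => y /=; apply/andP/eqP => [[/eqP h1 h2]|->]; lia.
apply/eqP; rewrite -leqn0 leqNgt -has_count; apply/hasP => -[y _ /= /andP[/eqP h1 h2]]; lia.
Qed.

Lemma Qm_down l : Qm l -> Qm (down l).
Proof.
move=> [h1 [h2 h3]].
have hb : forall j, bigR (down l) j -> bigR l j.+2.
  move=> j [x [jx]]; rewrite mult_down; case: ifP => // x0 hx.
  by exists x.+2.
split.
  move=> j oj; rewrite mult_down; case: ifP => // _; apply: h1; by rewrite /= negbK.
split.
  move=> j oj /hb hj; rewrite mult_down; case: ifP => // _; apply: h2 hj; by rewrite /= negbK.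
move=> j oj j0 /hb hj; rewrite mult_down j0; apply: h3 hj => //; by rewrite /= negbK.
Qed.

Lemma part_down l : is_partition l -> is_partition (down l).
Proof.
move=> /andP[hs hp]; apply/andP; split.
  rewrite /down sorted_map; apply: (sub_sorted _ (sorted_filter geq_tr _ hs)).
  by move=> x y /=; apply: leq_sub2r.
by rewrite /down all_map; apply/allP => y; rewrite mem_filter => /andP[h _] /=; lia.
Qed.

Lemma size_down l : 2 <= mult 2 l -> size (down l) < size l.
Proof.
move=> h; rewrite /down size_map size_filter.
have : count (fun y => 2 < y) l + count (predC (fun y => 2 < y)) l = size l by rewrite count_predC.
have : mult 2 l <= count (predC (fun y => 2 < y)) l.
  by apply: sub_count => y /= /eqP ->.
lia.
Qed.

Lemma perm_down L : all (fun y => 1 < y) L ->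
  perm_eq L (nseq (mult 2 L) 2 ++ map (addn 2) (down L)).
Proof.
move=> hL.
have e1 : map (addn 2) (down L) = [seq y <- L | 2 < y].
  rewrite /down -map_comp map_id_in // => y; rewrite mem_filter => /andP[h _] /=; lia.
have e2 : [seq y <- L | predC (fun y => 2 < y) y] = nseq (mult 2 L) 2.
  have /all_pred1P -> : all (pred1 2) [seq y <- L | predC (fun y => 2 < y) y].
    apply/allP => y; rewrite mem_filter => /andP[/= h1 /(allP hL) /= h2]; apply/eqP; lia.
  rewrite size_filter /mult; congr nseq; apply: eq_in_count => y /(allP hL) /= h.
  apply/idP/eqP; lia.
rewrite e1 -e2 perm_sym perm_catC perm_filterC; exact: perm_refl.
Qed.

Lemma part_head p : is_partition p -> all (fun x => x <= head 0 p) p.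
Proof. case: p => //= a q; rewrite part_cons => /and3P[h _ _]; by rewrite leqnn. Qed.

Lemma A2_nil : A2 [::] -> exists p, G2 p /\ f p = [::].
Proof.
move=> _; exists [::]; split => //; split => //; split => //.
Qed.

Lemma surj_all n l : size l <= n -> A2 l -> exists p, G2 p /\ f p = l.
Proof.
elim: n l => [|n IH] l hs hA.
  by case: l hs hA => // _; exact: A2_nil.
case: l hs hA => [|a l'] hs hA; first exact: A2_nil.
move: (hA) => /A2E [hpart hQ].
move: (hpart); rewrite part_cons => /and3P [hle a0 hpl'].
case hc: (uniq (a :: l') || (size (a :: l') < a)).
- have anl : a \notin l'.
    case/orP: hc => [/andP[] //|hlt]; apply/negP => al.
    have := Qm_size a (a :: l') hQ (ltac:(rewrite mult_cons eqxx; move: al; rewrite -mult_gt0; lia)).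
    lia.
  have hal : all (fun x => x < a) l'.
    apply/allP => x xl; have := allP hle x xl; rewrite /= leq_eqVlt => /orP[/eqP e|//].
    by move: anl; rewrite -e xl.
  have hA' : A2 l' by apply/A2E; split => //; exact: Qm_tail hal hQ.
  have [p' [hG' hf']] := IH l' (ltac:(move: hs => /=; lia)) hA'.
  have [hal' hm] : all (fun x => x < a) p' /\ mult a.-1 p' <= 1.
    case: (G2_cases _ hG') => [->|[[c [q [e [_ [c0 hcq]]]]]|[c [q [e [hq [c2 hcq]]]]]]] //.
    + have cl : c \in l' by rewrite -hf' e (perm_mem (proj1 (L1 _ _ c0 hcq))) inE eqxx.
      have ca := allP hal c cl.
      rewrite e; split.
        rewrite /= ca /=; apply/allP => x /(allP hcq) /=; lia.
      rewrite mult_cons mult0; last by apply/negP => /(allP hcq) /=; lia.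
      by case: (c == a.-1).
    + have hcq' : all (fun x => x < c) q by apply/allP => x /(allP hcq) /=; lia.
      have [hP hw] := L2 c q (ltac:(lia)) hcq'.
      have [_ _ _ [iq4 iq5] _] := INVp _ hq.
      have hh : head 0 q + 2 <= c by case: (q) hcq => //= x r /andP[]; lia.
      have nu : ~~ uniq l'.
        rewrite -hf' e (perm_uniq hP) cat_uniq.
        have -> : c - w q = (c - w q - 2).+2 by lia.
        by rewrite /= ?inE ?eqxx.
      have slt : size (a :: l') < a by move: hc => /orP[/= /andP[_ u]|//]; move: nu; rewrite u.
      have [_ _ _ [ip4 _] _] := INVp _ hG'.
      move: slt; rewrite /= -hf' ip4 e hw => ca.
      split.
        rewrite /=; apply/andP; split; first lia; apply/andP; split; first lia.
        by apply/allP => x /(allP hcq) /=; lia.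
      rewrite !mult_cons !mult0; first (have -> : (c == a.-1) = false by apply/eqP; lia); first by [].
      by apply/negP => /(allP hcq) /=; lia.
  exists (a :: p'); split; first exact: G2_single hG' a0 hal' hm.
  apply: (sorted_eq geq_tr geq_anti (sorted_f _) (proj1 (andP hpart))).
  by rewrite -hf'; exact: (proj1 (L1 _ _ a0 hal')).
move: hc hQ hpart hs; set L := a :: l' => hc hQ hpart hs.
have nu : ~~ uniq L by move: hc => /norP[].
have aL : a <= size L by move: hc => /norP[_]; rewrite -leqNgt.
have [x hx] := nuniq_mult L nu.
have [h1 [h2 h3]] := hQ.
have xL : x \in L by rewrite -mult_gt0; lia.
have x0 : 0 < x := allP (proj2 (andP hpart)) x xL.
have ex : ~~ odd x by apply/negP => ox; have := h1 x ox; lia.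
have x2 : 1 < x by move: ex x0; case: (x) => [|[|]].
have m1 : mult 1 L = 0 by apply: h2 => //; exists x; split.
have m2 : 2 <= mult 2 L.
  case: (eqVneq x 2) => [e|nx]; first by rewrite e in hx.
  move/eqP: nx => nx.
  apply: (h3 2) => //; exists x; split => //; lia.
have hL1 : all (fun y => 1 < y) L.
  apply/allP => y yL; have y0 := allP (proj2 (andP hpart)) y yL.
  rewrite /=; case: (eqVneq y 1) => [e|]; last by lia.
  by move: yL; rewrite e -mult_gt0 m1.
have hA'' : A2 (down L) by apply/A2E; split; [exact: part_down | exact: Qm_down].
have hsd := size_down _ m2.
have [p' [hG' hf']] := IH (down L) (ltac:(move: hs hsd; rewrite -/L; lia)) hA''.
have hPd := perm_down _ hL1.
have hsz : size L = mult 2 L + size (down L) by rewrite (perm_size hPd) size_cat size_nseq size_map.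
have [_ _ _ [ip4 ip5] _] := INVp _ hG'.
have hhd : head 0 p' + 2 <= size L.
  case: (G2_cases _ hG') => [->|[[c [q [e [_ [c0 hcq]]]]]|[c [q [e [hq [c2 hcq]]]]]]].
  + have : 2 <= size L by lia.
    by rewrite /=; lia.
  + have : c \in down L by rewrite -hf' e (perm_mem (proj1 (L1 _ _ c0 hcq))) inE eqxx.
    rewrite /down => /mapP [y]; rewrite mem_filter => /andP[y2 yL] ey.
    have : y <= a by move: yL; rewrite inE => /orP[/eqP -> //|/(allP hle)].
    have : head 0 p' = c by rewrite e.
    lia.
  + have hcq' : all (fun x => x < c) q by apply/allP => z /(allP hcq) /=; lia.
    have [_ hw] := L2 c q (ltac:(lia)) hcq'.
    have : head 0 p' = c by rewrite e.
    move: ip4; rewrite hf' e hw => ip4; lia.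
have hb : all (fun x => x.+2 <= size L) p'.
  apply/allP => y /(allP (part_head _ (proj1 hG'))) h.
  have h' : y <= head 0 p' := h.
  have h'' : y.+2 <= size L by lia.
  exact: h''.
have hbl : all (fun x => x < size L) p' by apply/allP => y /(allP hb) /=; lia.
exists (size L :: size L :: p'); split; first exact: (G2_double (size L) p' hG' (ltac:(lia)) hb).
apply: (sorted_eq geq_tr geq_anti (sorted_f _) (proj1 (andP hpart))).
have [hP hw] := L2 (size L) p' (ltac:(lia)) hbl.
apply: perm_trans hP _.
have -> : size L - w p' = mult 2 L by rewrite -ip4 hf'; lia.
by rewrite hf' perm_sym.
Qed.

Theorem theorem4 :
  (forall p, G2 p -> A2 (f p)) /\
  (forall p q, G2 p -> G2 q -> f p = f q -> p = q) /\
  (forall l, A2 l -> exists p, G2 p /\ f p = l) /\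
  (forall p, G2 p -> sumn (f p) = sumn p).
Proof.
split.
  move=> p hG; have [i1 i2 _ _ _] := INVp _ hG.
  apply/A2E; split => //; apply/andP; split; [exact: sorted_f | exact: i1].
split; first by move=> p q hp hq; exact: inj_all (leqnn _) hp hq.
split; first by move=> l hl; exact: surj_all (leqnn _) hl.
by move=> p hG; have [_ _ _ _ ->] := INVp _ hG.
Qed.
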